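(* Let $\Pi:X\to T$ be a tree of hyperbolic metric spaces satisfying the qi embedded condition with parameters $\delta_0,L_0,f$, and suppose $X$ is $\delta_0$-hyperbolic. Given $k\ge1$ there is $R=R(k,\delta_0)\ge0$ (depending only on $k$ and the parameters) such that the following holds. Let $T'\subseteq T$ be a geodesic ray in $T$ whose vertices are identified with $n\in\{0\}\cup\mathbb N$ (in order), and let $X_n$ denote the vertex space over $n$ with its intrinsic metric $d_{X_n}$. Let $\alpha,\beta$ be two $k$-qi sections of $T'$ which converge to the same point of $\partial X$. Then there exists $N\in\mathbb N$ such that $d_{X_n}(\alpha(n),\beta(n))\le R$ for all $n\ge N$.
   Context: Tree of hyperbolic metric spaces satisfying the qi embedded condition: $T$ is a simplicial tree, $(X,d)$ a geodesic metric space (all spaces other than $T$ are proper), $\Pi:X\to T$ a surjective 1-Lipschitz map. For a vertex $b$ let $X_b=\Pi^{-1}(b)$ with its induced length metric $d_b$; for an edge $e$ with midpoint $m_e$ let $X_e=\Pi^{-1}(m_e)$ with induced length metric $d_e$. With parameters $\delta_0\ge0$, $L_0\ge1$ and a proper function $f:\mathbb R_{\ge0}\to\mathbb R_{\ge0}$ one requires: (1) all $X_b$, $X_e$ are $\delta_0$-hyperbolic; (2) for a vertex $b$ and $u,w\in X_b$, $d_X(u,w)\le C$ implies $d_b(u,w)\le f(C)$, and likewise for edge spaces; (3) for each edge $e$ joining vertices $b,b'$ there is a map $f_e:X_e\times[0,1]\to\Pi^{-1}(e)$ such that $\Pi\circ f_e$ is the projection to $[0,1]$ followed by the identification $[0,1]\cong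 e$, $f_e$ restricted to $X_e\times(0,1)$ is an isometry onto $\Pi^{-1}(\text{interior of }e)$ with its path metric, and the restrictions to $X_e\times\{0\}$, $X_e\times\{1\}$ are $L_0$-qi embeddings into $X_b$, $X_{b'}$. A $k$-qi embedding means a $(k,k)$-quasi-isometric embedding. A $k$-qi section of a subtree $T'\subseteq T$ is a $k$-qi embedding $s:T'\to X$ with $\Pi\circ s$ equal to the identity on the vertex set of $T'$. *)

(* Defs.v *)
From Stdlib Require Import Reals Lra List ClassicalEpsilon.
Import ListNotations.
Open Scope R_scope.

Set Implicit Arguments.

Section Metric.
Variable X : Type.

Definition full : X -> Prop := fun _ => True.

Definition metric_on (A : X -> Prop) (dA : X -> X -> R) : Prop :=
  (forall x, A x -> dA x x = 0) /\
  (forall x y, A x -> A y -> 0 <= dA x y) /\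
  (forall x y, A x -> A y -> dA x y = 0 -> x = y) /\
  (forall x y, A x -> A y -> dA x y = dA y x) /\
  (forall x y z, A x -> A y -> A z -> dA x z <= dA x y + dA y z).

Definition geodesic_seg (A : X -> Prop) (dA : X -> X -> R)
    (x y : X) (gamma : R -> X) : Prop :=
  gamma 0 = x /\ gamma (dA x y) = y /\
  (forall s, 0 <= s <= dA x y -> A (gamma s)) /\
  (forall s t, 0 <= s <= dA x y -> 0 <= t <= dA x y ->
     dA (gamma s) (gamma t) = Rabs (s - t)).

Definition geodesic_space (A : X -> Prop) (dA : X -> X -> R) : Prop :=
  metric_on A dA /\
  forall x y, A x -> A y -> exists gamma, geodesic_seg A dA x y gamma.

Definition hyperbolic (A : X -> Prop) (dA : X -> X -> R) (delta : R) : Prop :=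
  geodesic_space A dA /\
  forall x y z g1 g2 g3, A x -> A y -> A z ->
    geodesic_seg A dA x y g1 -> geodesic_seg A dA y z g2 ->
    geodesic_seg A dA z x g3 ->
    forall s, 0 <= s <= dA x y ->
      exists t,
        (0 <= t <= dA y z /\ dA (g1 s) (g2 t) <= delta) \/
        (0 <= t <= dA z x /\ dA (g1 s) (g3 t) <= delta).

(* proper: closed balls are (sequentially) compact *)
Definition proper_space (A : X -> Prop) (dA : X -> X -> R) : Prop :=
  forall x rho (u : nat -> X), A x ->
    (forall n, A (u n) /\ dA x (u n) <= rho) ->
    exists (phi : nat -> nat) y,
      (forall n, (phi n < phi (S n))%nat) /\ A y /\
      forall eps, 0 < eps -> exists N, forall n, (N <= n)%nat ->
        dA (u (phi n)) y < eps.

Definition path_in (d : X -> X -> R) (A : X -> Prop) (u w : X)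
    (gamma : R -> X) : Prop :=
  gamma 0 = u /\ gamma 1 = w /\
  (forall t, 0 <= t <= 1 -> A (gamma t)) /\
  (forall t, 0 <= t <= 1 -> forall eps, 0 < eps -> exists eta, 0 < eta /\
     forall s, 0 <= s <= 1 -> Rabs (s - t) < eta -> d (gamma s) (gamma t) < eps).

Fixpoint psum (d : X -> X -> R) (gamma : R -> X) (l : list R) : R :=
  match l with
  | a :: ((b :: _) as l') => d (gamma a) (gamma b) + psum d gamma l'
  | _ => 0
  end.

Fixpoint incr (l : list R) : Prop :=
  match l with
  | a :: ((b :: _) as l') => a <= b /\ incr l'
  | _ => True
  end.

(* length(gamma) <= L  (length = sup over partitions) *)
Definition length_le (d : X -> X -> R) (gamma : R -> X) (L : R) : Prop :=
  forall l : list R, incr l -> (forall t, In t l -> 0 <= t <= 1) ->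
    psum d gamma l <= L.

(* r is the induced length (path) metric distance in A between u and w:
   the infimum of lengths of paths in A joining u and w. *)
Definition ilm (d : X -> X -> R) (A : X -> Prop) (u w : X) (r : R) : Prop :=
  (forall L, (exists gamma, path_in d A u w gamma /\ length_le d gamma L) -> r <= L) /\
  (forall r', (forall L, (exists gamma, path_in d A u w gamma /\ length_le d gamma L)
                 -> r' <= L) -> r' <= r).

Definition gprod (d : X -> X -> R) (p x y : X) : R :=
  (d p x + d p y - d x y) / 2.

Definition converges_at_infinity (d : X -> X -> R) (x : nat -> X) : Prop :=
  forall p M, exists N, forall m n, (N <= m)%nat -> (N <= n)%nat ->
    M <= gprod d p (x m) (x n).

Definition same_boundary_point (d : X -> X -> R) (x y : nat -> X) : Prop :=
  converges_at_infinity d x /\ converges_at_infinity d y /\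
  forall p M, exists N, forall m n, (N <= m)%nat -> (N <= n)%nat ->
    M <= gprod d p (x m) (y n).

End Metric.

Section Tree.
Variable V : Type.
Variable E : V -> V -> Prop.

Fixpoint walk (u v : V) (n : nat) : Prop :=
  match n with
  | O => u = v
  | S m => exists w, E u w /\ walk w v m
  end.

Fixpoint chain (l : list V) : Prop :=
  match l with
  | a :: ((b :: _) as l') => E a b /\ chain l'
  | _ => True
  end.

Definition is_simplicial_tree : Prop :=
  (forall u, ~ E u u) /\ (forall u v, E u v -> E v u) /\
  (forall u v, exists n, walk u v n) /\
  ~ (exists (v0 : V) (l : list V),
        (2 <= length l)%nat /\ NoDup (v0 :: l) /\ chain (v0 :: l) /\
        E (last l v0) v0).

Definition gdist_is (u v : V) (n : nat) : Prop :=
  walk u v n /\ forall m, (m < n)%nat -> ~ walk u v m.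

Definition gd (u v : V) : nat := epsilon (inhabits O) (fun n => gdist_is u v n).

(* points of the geometric realisation |T| (edge length 1):
   TV v is the vertex v, TE u v t the point of the edge [u,v] at distance
   t from u (0 < t < 1); TE u v t and TE v u (1-t) denote the same point. *)
Inductive tpt : Type := TV (v : V) | TE (u v : V) (t : R).

Definition valid_pt (p : tpt) : Prop :=
  match p with TV _ => True | TE u v t => E u v /\ 0 < t < 1 end.

Definition pv (p : tpt) (a : V) : R :=
  match p with
  | TV v => INR (gd v a)
  | TE u v t => Rmin (t + INR (gd u a)) (1 - t + INR (gd v a))
  end.

Definition tdist (p q : tpt) : R :=
  match p, q with
  | TV a, _ => pv q a
  | TE _ _ _, TV b => pv p b
  | TE u v t, TE u' v' t' =>
      if excluded_middle_informative (u = u' /\ v = v') then Rabs (t - t')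
      else if excluded_middle_informative (u = v' /\ v = u') then Rabs (t - (1 - t'))
      else Rmin (t + pv q u) (1 - t + pv q v)
  end.

Definition ept (b b' : V) (t : R) : tpt :=
  if excluded_middle_informative (t = 0) then TV b
  else if excluded_middle_informative (t = 1) then TV b' else TE b b' t.

Definition geodesic_ray (r : nat -> V) : Prop :=
  forall m n, gd (r m) (r n) = (if (m <=? n)%nat then n - m else m - n)%nat.

End Tree.

Section TreeOfSpaces.
Variables (X V : Type) (d : X -> X -> R) (E : V -> V -> Prop)
          (Pi : X -> tpt V).

Definition Xv (b : V) : X -> Prop := fun x => Pi x = TV b.
Definition Xe (b b' : V) : X -> Prop :=
  fun x => Pi x = TE b b' (1/2) \/ Pi x = TE b' b (1/2).
Definition Xint (b b' : V) : X -> Prop :=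
  fun x => exists t, 0 < t < 1 /\ (Pi x = TE b b' t \/ Pi x = TE b' b t).

Definition proper_fun (f : R -> R) : Prop :=
  (forall t, 0 <= t -> 0 <= f t) /\
  forall M, exists N, forall t, 0 <= t -> f t <= M -> t <= N.

Definition qi_embedding_ineq (k dsrc dtgt : R) : Prop :=
  (1 / k) * dsrc - k <= dtgt /\ dtgt <= k * dsrc + k.

Definition edge_map_cond (db : V -> X -> X -> R) (de : V -> V -> X -> X -> R)
    (L0 : R) (b b' : V) (fe : X -> R -> X) : Prop :=
  (forall x t, Xe b b' x -> 0 <= t <= 1 ->
     Pi (fe x t) = ept b b' t \/ (0 < t < 1 /\ Pi (fe x t) = TE b' b (1 - t))) /\
  (exists dint : X -> X -> R,
     (forall u w, Xint b b' u -> Xint b b' w -> ilm d (Xint b b') u w (dint u w)) /\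
     (* isometry of X_e x (0,1) (product metric) onto Pi^{-1}(int e) *)
     (forall x y s t, Xe b b' x -> Xe b b' y -> 0 < s < 1 -> 0 < t < 1 ->
        dint (fe x s) (fe y t) = sqrt ((de b b' x y) ^ 2 + (s - t) ^ 2)) /\
     (forall z, Xint b b' z -> exists x t, Xe b b' x /\ 0 < t < 1 /\ fe x t = z)) /\
  (forall x y, Xe b b' x -> Xe b b' y ->
     qi_embedding_ineq L0 (de b b' x y) (db b (fe x 0) (fe y 0))) /\
  (forall x y, Xe b b' x -> Xe b b' y ->
     qi_embedding_ineq L0 (de b b' x y) (db b' (fe x 1) (fe y 1))).

Definition tree_of_hyp_spaces (db : V -> X -> X -> R) (de : V -> V -> X -> X -> R)
    (delta0 L0 : R) (f : R -> R) : Prop :=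
  is_simplicial_tree E /\
  geodesic_space (@full X) d /\ proper_space (@full X) d /\
  (forall x, valid_pt E (Pi x)) /\
  (forall p, valid_pt E p -> exists x, Pi x = p) /\
  (forall x y, tdist E (Pi x) (Pi y) <= d x y) /\
  (forall b u w, Xv b u -> Xv b w -> ilm d (Xv b) u w (db b u w)) /\
  (forall b b' u w, E b b' -> Xe b b' u -> Xe b b' w ->
     ilm d (Xe b b') u w (de b b' u w)) /\
  0 <= delta0 /\ 1 <= L0 /\ proper_fun f /\
  (forall b, hyperbolic (Xv b) (db b) delta0 /\ proper_space (Xv b) (db b)) /\
  (forall b b', E b b' ->
     hyperbolic (Xe b b') (de b b') delta0 /\ proper_space (Xe b b') (de b b')) /\
  (forall b u w C, Xv b u -> Xv b w -> d u w <= C -> db b u w <= f C) /\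
  (forall b b' u w C, E b b' -> Xe b b' u -> Xe b b' w -> d u w <= C ->
     de b b' u w <= f C) /\
  (forall b b', E b b' -> exists fe, edge_map_cond db de L0 b b' fe).

Definition qi_section (r : nat -> V) (k : R) (s : nat -> X) : Prop :=
  (forall n, Pi (s n) = TV (r n)) /\
  forall m n, qi_embedding_ineq k (INR (gd E (r m) (r n))) (d (s m) (s n)).

End TreeOfSpaces.

(* Main.v *)
Require Import Defs.
From Stdlib Require Import Reals Lra Lia Classical Wf_nat Arith.
Open Scope R_scope.
Set Implicit Arguments.

Lemma least_nat (P : nat -> Prop) n : P n ->
  exists t, P t /\ forall t', (t' < t)%nat -> ~ P t'.
Proof.
  revert P. induction n as [n IH] using (well_founded_induction lt_wf). intros P Hn.
  destruct (classic (exists t', (t' < n)%nat /\ P t')) as [[t' [Ht' Pt']]|Hno].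
  - exact (IH t' Ht' P Pt').
  - exists n. split; [exact Hn|]. intros t' Ht' Pt'. apply Hno. eauto.
Qed.


Lemma hyp_metric X (d : X -> X -> R) dl : hyperbolic (@full X) d dl ->
  (forall x, d x x = 0) /\ (forall x y, 0 <= d x y) /\
  (forall x y, d x y = d y x) /\ (forall x y z, d x z <= d x y + d y z).
Proof.
  intros [[[H1 [H2 [_ [H4 H5]]]] _] _].
  repeat split; intros; [apply H1|apply H2|apply H4|apply (H5 x y z)]; exact I.
Qed.

Lemma hyp_geo X (d : X -> X -> R) dl : hyperbolic (@full X) d dl ->
  forall x y, exists g, geodesic_seg (@full X) d x y g.
Proof. intros [[_ H] _] x y. apply H; exact I. Qed.

Lemma hyp_slim X (d : X -> X -> R) dl : hyperbolic (@full X) d dl ->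
  forall x y z g1 g2 g3,
    geodesic_seg (@full X) d x y g1 -> geodesic_seg (@full X) d y z g2 ->
    geodesic_seg (@full X) d z x g3 ->
    forall s, 0 <= s <= d x y ->
      exists t,
        (0 <= t <= d y z /\ d (g1 s) (g2 t) <= dl) \/
        (0 <= t <= d z x /\ d (g1 s) (g3 t) <= dl).
Proof. intros [_ H] x y z g1 g2 g3 ? ? ?. apply H; auto; exact I. Qed.

Lemma geo_dist_start X (d : X -> X -> R) x y g :
  geodesic_seg (@full X) d x y g -> forall t, 0 <= t <= d x y -> d (g t) x = t.
Proof.
  intros [H0 [H1 [_ H3]]] t Ht. rewrite <- H0 at 1.
  rewrite H3 by lra. rewrite Rminus_0_r. apply Rabs_right; lra.
Qed.

Lemma geo_dist_end X (d : X -> X -> R) x y g :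
  geodesic_seg (@full X) d x y g -> forall t, 0 <= t <= d x y -> d (g t) y = d x y - t.
Proof.
  intros [H0 [H1 [_ H3]]] t Ht. rewrite <- H1 at 1.
  rewrite H3 by lra. rewrite Rabs_left1; lra.
Qed.

Lemma geo_iso X (d : X -> X -> R) x y g :
  geodesic_seg (@full X) d x y g -> forall s t, 0 <= s <= d x y -> 0 <= t <= d x y ->
  d (g s) (g t) = Rabs (s - t).
Proof. intros [_ [_ [_ H3]]]. exact H3. Qed.

Lemma geo_rev X (d : X -> X -> R) dl x y g : hyperbolic (@full X) d dl ->
  geodesic_seg (@full X) d x y g ->
  geodesic_seg (@full X) d y x (fun t => g (d x y - t)).
Proof.
  intros HH Hg. destruct (hyp_metric HH) as [D0 [Dp [Ds Dt]]].
  destruct Hg as [H0 [H1 [H2 H3]]].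
  unfold geodesic_seg. rewrite (Ds y x). repeat split.
  - rewrite Rminus_0_r. exact H1.
  - rewrite Rminus_diag. exact H0.
  - intros s t Hs Ht. rewrite H3 by lra. replace (d x y - s - (d x y - t)) with (-(s - t)) by ring; apply Rabs_Ropp.
Qed.

Lemma geo_sub X (d : X -> X -> R) dl x y g : hyperbolic (@full X) d dl ->
  geodesic_seg (@full X) d x y g -> forall s1 s2, 0 <= s1 <= d x y -> 0 <= s2 <= d x y ->
  exists g', geodesic_seg (@full X) d (g s1) (g s2) g' /\
    forall t, 0 <= t <= d (g s1) (g s2) -> exists s, 0 <= s <= d x y /\ g' t = g s.
Proof.
  intros HH Hg s1 s2 H1 H2. pose proof (geo_iso Hg) as Hi.
  assert (E : d (g s1) (g s2) = Rabs (s1 - s2)) by (apply Hi; lra).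
  destruct (Rle_dec s1 s2) as [Hle|Hlt].
  - rewrite Rabs_left1 in E by lra.
    exists (fun t => g (s1 + t)). split.
    + repeat split.
      * rewrite Rplus_0_r; reflexivity.
      * rewrite E. f_equal; ring.
      * intros s t Hs Ht. rewrite E in Hs, Ht. rewrite Hi by lra. f_equal; ring.
    + intros t Ht. rewrite E in Ht. exists (s1 + t). split; [lra|reflexivity].
  - rewrite Rabs_right in E by lra.
    exists (fun t => g (s1 - t)). split.
    + repeat split.
      * rewrite Rminus_0_r; reflexivity.
      * rewrite E. f_equal; ring.
      * intros s t Hs Ht. rewrite E in Hs, Ht. rewrite Hi by lra.
        rewrite <- Rabs_Ropp. f_equal; ring.
    + intros t Ht. rewrite E in Ht. exists (s1 - t). split; [lra|reflexivity].
Qed.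

Lemma geo_gprod X (d : X -> X -> R) dl x y g p : hyperbolic (@full X) d dl ->
  geodesic_seg (@full X) d x y g -> forall t, 0 <= t <= d x y ->
  gprod d p x y <= d p (g t).
Proof.
  intros HH Hg t Ht. destruct (hyp_metric HH) as [D0 [Dp [Ds Dt]]].
  pose proof (geo_dist_start Hg Ht). pose proof (geo_dist_end Hg Ht).
  unfold gprod. pose proof (Dt p (g t) x). pose proof (Dt p (g t) y).
  rewrite (Ds (g t) x) in *. rewrite (Ds (g t) y) in *. lra.
Qed.


Lemma step1_base X (d : X -> X -> R) dl (HH : hyperbolic (@full X) d dl)
  (w : nat -> X) (c : R) (Hc : 0 <= c) a m : (m <= 1)%nat ->
  (forall i, (a <= i)%nat -> (i < a + m)%nat -> d (w i) (w (S i)) <= c) ->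
  forall g, geodesic_seg (@full X) d (w a) (w (a + m)%nat) g ->
  forall s, 0 <= s <= d (w a) (w (a + m)%nat) ->
  exists i, (a <= i <= a + m)%nat /\ d (g s) (w i) <= c.
Proof.
  intros Hm Hw g Hg s Hs. exists a. split; [lia|].
  rewrite (geo_dist_start Hg Hs).
  destruct (hyp_metric HH) as [D0 [Dp [Ds Dt]]].
  destruct m as [|[|m]]; [ | | lia].
  - rewrite Nat.add_0_r, D0 in Hs. lra.
  - specialize (Hw a ltac:(lia) ltac:(lia)). rewrite Nat.add_1_r in Hs. lra.
Qed.

Lemma step1 X (d : X -> X -> R) dl (HH : hyperbolic (@full X) d dl) (Hdl : 0 <= dl)
  (w : nat -> X) (c : R) (Hc : 0 <= c) : forall J a m, (m <= 2 ^ J)%nat ->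
  (forall i, (a <= i)%nat -> (i < a + m)%nat -> d (w i) (w (S i)) <= c) ->
  forall g, geodesic_seg (@full X) d (w a) (w (a + m)%nat) g ->
  forall s, 0 <= s <= d (w a) (w (a + m)%nat) ->
  exists i, (a <= i <= a + m)%nat /\ d (g s) (w i) <= dl * INR J + c.
Proof.
  destruct (hyp_metric HH) as [D0 [Dp [Ds Dt]]].
  induction J as [|J IH]; intros a m Hm Hw g Hg s Hs.
  - simpl in Hm. destruct (step1_base HH w Hc Hm Hw Hg Hs) as [i [Hi Hd]].
    exists i. split; [exact Hi|]. simpl. lra.
  - destruct (le_lt_dec m 1) as [Hm1|Hm1].
    { destruct (step1_base HH w Hc Hm1 Hw Hg Hs) as [i [Hi Hd]].
      exists i. split; [exact Hi|]. rewrite S_INR.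
      assert (0 <= dl * (INR J + 1)) by (apply Rmult_le_pos; [lra|]; pose proof (pos_INR J); lra).
      lra. }
    set (h := (m / 2)%nat).
    assert (Hdm := Nat.div_mod m 2 ltac:(lia)).
    assert (Hmb := Nat.mod_upper_bound m 2 ltac:(lia)).
    fold h in Hdm. rewrite Nat.pow_succ_r' in Hm.
    assert (Hh1 : (h <= 2 ^ J)%nat) by lia.
    assert (Hh2 : (m - h <= 2 ^ J)%nat) by lia.
    destruct (hyp_geo HH (w (a + m)%nat) (w (a + h)%nat)) as [g2 Hg2].
    destruct (hyp_geo HH (w (a + h)%nat) (w a)) as [g3 Hg3].
    destruct (hyp_slim HH Hg Hg2 Hg3 Hs) as [t [[Ht Hd]|[Ht Hd]]].
    + pose proof (geo_rev HH Hg2) as Hr.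
      replace (w (a + m)%nat) with (w (a + h + (m - h))%nat) in Hr
        by (f_equal; lia).
      assert (Hu : 0 <= d (w (a + m)%nat) (w (a + h)%nat) - t
                     <= d (w (a + h)%nat) (w (a + h + (m - h))%nat)).
      { replace (a + h + (m - h))%nat with (a + m)%nat by (clear -Hdm Hmb; lia).
        rewrite (Ds (w (a + h)%nat)). lra. }
      destruct (IH (a + h)%nat (m - h)%nat Hh2 ltac:(intros; apply Hw; lia) _ Hr _ Hu)
        as [i [Hi Hdi]].
      exists i. split; [lia|].
      replace (a + h + (m - h))%nat with (a + m)%nat in Hdi by (clear -Hdm Hmb; lia).
      replace (d (w (a + m)%nat) (w (a + h)%nat) -
                (d (w (a + m)%nat) (w (a + h)%nat) - t)) with t in Hdi by ring.
      rewrite S_INR. pose proof (Dt (g s) (g2 t) (w i)). rewrite Rmult_plus_distr_l, Rmult_1_r. lra.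
    + pose proof (geo_rev HH Hg3) as Hr.
      assert (Hu : 0 <= d (w (a + h)%nat) (w a) - t <= d (w a) (w (a + h)%nat)).
      { rewrite (Ds (w a)). lra. }
      destruct (IH a h Hh1 ltac:(intros; apply Hw; lia) _ Hr _ Hu)
        as [i [Hi Hdi]].
      exists i. split; [lia|].
      replace (d (w (a + h)%nat) (w a) - (d (w (a + h)%nat) (w a) - t)) with t in Hdi by ring.
      rewrite S_INR. pose proof (Dt (g s) (g3 t) (w i)). rewrite Rmult_plus_distr_l, Rmult_1_r. lra.
Qed.

Lemma geo_end_le X (d : X -> X -> R) dl (HH : hyperbolic (@full X) d dl) x y g :
  geodesic_seg (@full X) d x y g -> forall t, 0 <= t <= d x y -> d (g t) y <= d x y.
Proof. intros Hg t Ht. rewrite (geo_dist_end Hg Ht). lra. Qed.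

Lemma geo_start_le X (d : X -> X -> R) dl (HH : hyperbolic (@full X) d dl) x y g :
  geodesic_seg (@full X) d x y g -> forall t, 0 <= t <= d x y -> d (g t) x <= d x y.
Proof. intros Hg t Ht. rewrite (geo_dist_start Hg Ht). lra. Qed.

Lemma step1q X (d : X -> X -> R) dl (HH : hyperbolic (@full X) d dl) (Hdl : 0 <= dl)
  (w : nat -> X) (c : R) (Hc : 0 <= c) J a m : (m <= 2 ^ J)%nat ->
  (forall i, (a <= i)%nat -> (i < a + m)%nat -> d (w i) (w (S i)) <= c) ->
  forall x y g, geodesic_seg (@full X) d x y g ->
  forall s, 0 <= s <= d x y ->
  d (g s) (w a) <= 2 * dl + d x (w a) \/
  d (g s) (w (a + m)%nat) <= 2 * dl + d y (w (a + m)%nat) \/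
  exists i, (a <= i <= a + m)%nat /\ d (g s) (w i) <= 2 * dl + dl * INR J + c.
Proof.
  intros Hm Hw x y g Hg s Hs.
  destruct (hyp_metric HH) as [D0 [Dp [Ds Dt]]].
  destruct (hyp_geo HH y (w (a + m)%nat)) as [g2 Hg2].
  destruct (hyp_geo HH (w (a + m)%nat) x) as [g3 Hg3].
  destruct (hyp_slim HH Hg Hg2 Hg3 Hs) as [t [[Ht Hd]|[Ht Hd]]].
  - right; left. pose proof (geo_end_le HH Hg2 Ht).
    pose proof (Dt (g s) (g2 t) (w (a + m)%nat)). lra.
  - destruct (hyp_geo HH x (w a)) as [g4 Hg4].
    destruct (hyp_geo HH (w a) (w (a + m)%nat)) as [g5 Hg5].
    destruct (hyp_slim HH Hg3 Hg4 Hg5 Ht) as [t' [[Ht' Hd']|[Ht' Hd']]].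
    + left. pose proof (geo_end_le HH Hg4 Ht').
      pose proof (Dt (g s) (g3 t) (w a)). pose proof (Dt (g3 t) (g4 t') (w a)). lra.
    + right; right.
      destruct (step1 HH Hdl w Hc J Hm Hw Hg5 Ht') as [i [Hi Hdi]].
      exists i. split; [exact Hi|].
      pose proof (Dt (g s) (g3 t) (w i)). pose proof (Dt (g3 t) (g5 t') (w i)). lra.
Qed.

Lemma sq_pow2 : forall n, INR n * INR n <= 4 * INR (2 ^ n).
Proof.
  intro n. rewrite pow_INR. simpl INR at 3.
  induction n as [|n IH].
  - simpl. lra.
  - destruct (le_lt_dec n 2) as [Hn|Hn].
    + destruct n as [|[|[|n]]]; try lia; simpl; lra.
    + rewrite S_INR. simpl pow.
      assert (3 <= INR n) by (replace 3 with (INR 3) by (simpl; lra); apply le_INR; lia).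
      nra.
Qed.

Lemma growth : forall A B : R, exists J0 : nat, forall J, (J0 <= J)%nat ->
  A + B * INR J <= INR (2 ^ J).
Proof.
  intros A B. destruct (INR_unbounded (4 * (Rabs A + Rabs B) + 1)) as [J0 HJ0].
  exists J0. intros J HJ. pose proof (sq_pow2 J).
  assert (INR J0 <= INR J) by (apply le_INR; exact HJ).
  pose proof (Rabs_pos A). pose proof (Rabs_pos B).
  assert (A <= Rabs A) by apply RRle_abs. assert (B <= Rabs B) by apply RRle_abs.
  assert (1 <= INR J) by lra.
  assert (B * INR J <= Rabs B * INR J) by (apply Rmult_le_compat_r; lra).
  assert (Rabs A <= Rabs A * INR J) by nra.
  assert (4 * (Rabs A + Rabs B) * INR J <= INR J * INR J) by nra.
  lra.
Qed.

Lemma final_arith (A0 B0 : R) (HB : 0 <= B0) (Js : nat)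
  (HJ : forall J, (Js <= J)%nat -> 6 * (A0 + B0 * INR (S J)) < INR (2 ^ J)) (D : nat) :
  (forall J, (6 * D <= 2 ^ J)%nat -> INR D <= A0 + B0 * INR J) ->
  INR D <= A0 + B0 * INR Js.
Proof.
  intros HQ.
  destruct (le_lt_dec (6 * D) (2 ^ Js)) as [H|H]; [apply HQ; exact H|].
  assert (Hex : (6 * D <= 2 ^ (6 * D))%nat).
  { apply Nat.lt_le_incl. apply Nat.pow_gt_lin_r. lia. }
  destruct (@least_nat (fun J => (6 * D <= 2 ^ J)%nat) _ Hex) as [J [HJ1 HJ2]].
  destruct (le_lt_dec J Js) as [HJs|HJs].
  { exfalso. assert (2 ^ J <= 2 ^ Js)%nat by (apply Nat.pow_le_mono_r; lia). lia. }
  destruct J as [|J']; [lia|].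
  assert (HJ' : (2 ^ J' < 6 * D)%nat).
  { destruct (le_lt_dec (6 * D) (2 ^ J')) as [h|h]; [|exact h].
    exfalso. exact (HJ2 J' ltac:(lia) h). }
  pose proof (HQ (S J') HJ1) as H1.
  pose proof (HJ J' ltac:(lia)) as H2.
  apply lt_INR in HJ'. rewrite mult_INR in HJ'. simpl (INR 6) in HJ'.
  lra.
Qed.

Definition qseq X (d : X -> X -> R) (k : R) (v : nat -> X) : Prop :=
  forall i j, (i <= j)%nat -> INR j - INR i <= d (v i) (v j) <= k * (INR j - INR i) + k.

Lemma step2_cases X (d : X -> X -> R) dl (HH : hyperbolic (@full X) d dl) (Hdl : 0 <= dl)
  k (Hk : 1 <= k) v (Hv : qseq d k v) (D i0 i1 i2 K : nat) (rho ex ey : R) u u' :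
  K = (3 * D)%nat -> (i1 <= i0 <= i2)%nat -> 2 * dl <= rho -> ex <= INR D -> ey <= INR D ->
  d u u' <= 1 ->
  ((d u (v i1) <= 2 * dl + ex /\ (i1 + K)%nat = i0) \/
     exists a, (i1 <= a <= i0)%nat /\ d u (v a) <= rho) ->
  ((d u' (v i2) <= 2 * dl + ey /\ i2 = (i0 + K)%nat) \/
     exists b, (i0 <= b <= i2)%nat /\ d u' (v b) <= rho) ->
  INR D - 1 < d (v i0) u' ->
  INR D <= 1 + 2 * k + (2 * k + 1) * rho.
Proof.
  intros HK Hi Hr Hex Hey Huu HL HR Hfar.
  destruct (hyp_metric HH) as [D0 [Dp [Ds Dt]]].
  assert (HKr : INR K = 3 * INR D) by (rewrite HK, mult_INR; simpl; lra).
  assert (Hrho : 0 <= rho) by lra.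
  pose proof (pos_INR D).
  destruct HL as [[HLd HLe]|[a [Ha HLd]]]; destruct HR as [[HRd HRe]|[b [Hb HRd]]].
  -
    assert (Hab : (i1 <= i2)%nat) by lia.
    destruct (Hv i1 i2 Hab) as [Hq _].
    assert (INR i2 = INR i1 + 2 * INR K) by (rewrite HRe, <- HLe, !plus_INR; ring).
    pose proof (Dt (v i1) u (v i2)). pose proof (Dt u u' (v i2)). rewrite (Ds (v i1) u) in *.
    assert (2 * dl <= 2 * k * rho) by nra. lra.
  - assert (Hab : (i1 <= b)%nat) by lia.
    destruct (Hv i1 b Hab) as [Hq _].
    assert (INR i0 <= INR b) by (apply le_INR; lia).
    assert (INR i0 = INR i1 + INR K) by (rewrite <- HLe, !plus_INR; ring).
    pose proof (Dt (v i1) u (v b)). pose proof (Dt u u' (v b)). rewrite (Ds (v i1) u) in *.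
    assert (2 * dl <= 2 * k * rho) by nra. lra.
  - assert (Hab : (a <= i2)%nat) by lia.
    destruct (Hv a i2 Hab) as [Hq _].
    assert (INR a <= INR i0) by (apply le_INR; lia).
    assert (INR i2 = INR i0 + INR K) by (rewrite HRe, !plus_INR; ring).
    pose proof (Dt (v a) u (v i2)). pose proof (Dt u u' (v i2)). rewrite (Ds (v a) u) in *.
    assert (2 * dl <= 2 * k * rho) by nra. lra.
  - assert (Hab : (a <= b)%nat) by lia.
    destruct (Hv a b Hab) as [Hq _].
    destruct (Hv i0 b ltac:(lia)) as [_ Hq2].
    assert (INR a <= INR i0) by (apply le_INR; lia).
    pose proof (Dt (v a) u (v b)). pose proof (Dt u u' (v b)). rewrite (Ds (v a) u) in *.
    assert (Hb1 : INR b - INR a <= 2 * rho + 1) by lra.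
    assert (k * (INR b - INR i0) <= k * (2 * rho + 1)) by (apply Rmult_le_compat_l; lra).
    pose proof (Dt (v i0) (v b) u'). rewrite (Ds (v b) u') in *. lra.
Qed.

Lemma rmin_step (t : nat) (L : R) : 0 <= L ->
  Rabs (Rmin (INR t) L - Rmin (INR (S t)) L) <= 1 /\ 0 <= Rmin (INR t) L <= L.
Proof.
  intros HL. rewrite S_INR. pose proof (pos_INR t).
  unfold Rmin. destruct (Rle_dec (INR t) L); destruct (Rle_dec (INR t + 1) L);
  split; try (apply Rabs_le; lra); lra.
Qed.

Lemma step2_core X (d : X -> X -> R) dl (HH : hyperbolic (@full X) d dl) (Hdl : 0 <= dl)
  k (Hk : 1 <= k) v (Hv : qseq d k v) m G
  (HG : geodesic_seg (@full X) d (v 0%nat) (v m) G) (D' i0 : nat) (Hi0 : (i0 <= m)%nat)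
  (Hfar : forall s, 0 <= s <= d (v 0%nat) (v m) -> INR D' < d (v i0) (G s))
  (HP : forall j, (j <= m)%nat -> exists s, 0 <= s <= d (v 0%nat) (v m) /\
          d (v j) (G s) <= INR (S D'))
  J (HJ : (6 * S D' <= 2 ^ J)%nat) :
  INR (S D') <= 1 + 2 * k + (2 * k + 1) * (2 * dl + dl * INR J + 2 * k).
Proof.
  destruct (hyp_metric HH) as [D0 [Dp [Ds Dt]]].
  set (D := S D') in *. set (K := (3 * D)%nat). set (i1 := (i0 - K)%nat).
  set (i2 := Nat.min m (i0 + K)). set (L := d (v 0%nat) (v m)).
  set (rho := 2 * dl + dl * INR J + 2 * k).
  assert (HG0 : G 0 = v 0%nat) by (destruct HG; tauto).
  assert (HGL : G L = v m) by (destruct HG as [_ [H _]]; exact H).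
  assert (HL0 : 0 <= L) by apply Dp.
  assert (HINRD : INR D' = INR D - 1) by (unfold D; rewrite S_INR; ring).
  assert (Hsy : exists sy, 0 <= sy <= L /\ d (v i1) (G sy) <= INR D /\
            (d (v i1) (G sy) = 0 \/ (i1 + K)%nat = i0)).
  { destruct (le_lt_dec i0 K) as [h|h].
    - exists 0. assert (i1 = 0%nat) by (unfold i1; lia). rewrite H, HG0, D0.
      split; [lra|]. split; [apply pos_INR|left; reflexivity].
    - destruct (HP i1 ltac:(unfold i1; lia)) as [sy [Hs1 Hs2]].
      exists sy. split; [exact Hs1|]. split; [exact Hs2|right; unfold i1; lia]. }
  assert (Hsz : exists sz, 0 <= sz <= L /\ d (v i2) (G sz) <= INR D /\
            (d (v i2) (G sz) = 0 \/ i2 = (i0 + K)%nat)).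
  { destruct (le_lt_dec m (i0 + K)) as [h|h].
    - exists L. assert (i2 = m) by (unfold i2; lia). rewrite H, HGL, D0.
      split; [lra|]. split; [apply pos_INR|left; reflexivity].
    - destruct (HP i2 ltac:(unfold i2; lia)) as [sz [Hs1 Hs2]].
      exists sz. split; [exact Hs1|]. split; [exact Hs2|right; unfold i2; lia]. }
  destruct Hsy as [sy [Hsy1 [Hsy2 Hsy3]]]. destruct Hsz as [sz [Hsz1 [Hsz2 Hsz3]]].
  set (ex := d (v i1) (G sy)) in *. set (ey := d (v i2) (G sz)) in *.
  destruct (geo_sub HH HG Hsy1 Hsz1) as [g' [Hg' Hpts]].
  set (L' := d (G sy) (G sz)) in *.
  assert (HL'0 : 0 <= L') by apply Dp.
  assert (Hrho : 2 * dl <= rho).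
  { unfold rho. pose proof (pos_INR J). assert (0 <= dl * INR J) by (apply Rmult_le_pos; lra). lra. }
  set (Lt := fun u => (d u (v i1) <= 2 * dl + ex /\ (i1 + K)%nat = i0) \/
     exists a, (i1 <= a <= i0)%nat /\ d u (v a) <= rho).
  set (Rt := fun u => (d u (v i2) <= 2 * dl + ey /\ i2 = (i0 + K)%nat) \/
     exists b, (i0 <= b <= i2)%nat /\ d u (v b) <= rho).
  assert (Hi12 : (i1 <= i0 <= i2)%nat) by (unfold i1, i2; lia).
  assert (HLR : forall t, 0 <= t <= L' -> Lt (g' t) \/ Rt (g' t)).
  { intros t Ht.
    assert (Hm' : (i2 - i1 <= 2 ^ J)%nat) by (unfold i2, i1, K; lia).
    assert (Hc : forall i, (i1 <= i)%nat -> (i < i1 + (i2 - i1))%nat ->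
                   d (v i) (v (S i)) <= 2 * k).
    { intros i _ _. destruct (Hv i (S i) ltac:(lia)) as [_ H]. rewrite S_INR in H. lra. }
    destruct (step1q HH Hdl v (ltac:(lra) : 0 <= 2 * k) J Hm' Hc Hg' Ht)
      as [HA|[HB|[i [Hi Hdi]]]];
      replace (i1 + (i2 - i1))%nat with i2 in * by lia.
    - left. rewrite (Ds (G sy)) in HA. fold ex in HA.
      destruct Hsy3 as [Hz|Hz].
      + right. exists i1. split; [lia|]. lra.
      + left. split; [exact HA|exact Hz].
    - right. rewrite (Ds (G sz)) in HB. fold ey in HB.
      destruct Hsz3 as [Hz|Hz].
      + right. exists i2. split; [lia|]. lra.
      + left. split; [exact HB|exact Hz].
    - destruct (le_lt_dec i i0) as [h|h].
      + left. right. exists i. split; [lia|]. unfold rho. lra.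
      + right. right. exists i. split; [lia|]. unfold rho. lra. }
  set (U := fun t : nat => g' (Rmin (INR t) L')).
  assert (HU : forall t, Rabs (Rmin (INR t) L' - Rmin (INR (S t)) L') <= 1 /\
                 0 <= Rmin (INR t) L' <= L') by (intro t; apply rmin_step; exact HL'0).
  assert (HUL : forall t, Lt (U t) \/ Rt (U t)) by (intro t; apply HLR, HU).
  assert (HU0 : U 0%nat = G sy).
  { unfold U. simpl INR. rewrite Rmin_left by lra. destruct Hg'; tauto. }
  assert (HLt0 : Lt (U 0%nat)).
  { rewrite HU0. destruct Hsy3 as [Hz|Hz].
    - right. exists i1. split; [lia|]. rewrite Ds. fold ex. lra.
    - left. split; [rewrite Ds; fold ex; lra|exact Hz]. }
  destruct (INR_unbounded L') as [T HT].
  assert (HRtT : Rt (U T)).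
  { unfold U. rewrite Rmin_right by lra.
    destruct Hg' as [_ [HE _]]. change (g' L' = G sz) in HE. rewrite HE.
    destruct Hsz3 as [Hz|Hz].
    - right. exists i2. split; [lia|]. rewrite Ds. fold ey. lra.
    - left. split; [rewrite Ds; fold ey; lra|exact Hz]. }
  destruct (@least_nat (fun t => Rt (U t)) _ HRtT) as [ts [Hts1 Hts2]].
  assert (Hfar' : forall t, INR D - 1 < d (v i0) (U t)).
  { intro t. unfold U. destruct (HU t) as [_ Ht].
    destruct (Hpts _ Ht) as [s [Hs Hs']]. rewrite Hs'. rewrite <- HINRD. apply Hfar. exact Hs. }
  destruct ts as [|t].
  - apply (@step2_cases _ _ _ HH Hdl _ Hk _ Hv D i0 i1 i2 K rho ex ey (U 0%nat) (U 0%nat));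
      try lra; auto.
    rewrite D0; lra.
  - assert (HLt : Lt (U t)).
    { destruct (HUL t) as [h|h]; [exact h|]. exfalso. exact (Hts2 t ltac:(lia) h). }
    apply (@step2_cases _ _ _ HH Hdl _ Hk _ Hv D i0 i1 i2 K rho ex ey (U t) (U (S t)));
      try lra; auto.
    unfold U. destruct (HU t) as [H1 H2]. destruct (HU (S t)) as [_ H3].
    rewrite (geo_iso Hg' H2 H3). exact H1.
Qed.

Definition A0c (k dl : R) := 1 + 2 * k + (2 * k + 1) * (2 * dl + 2 * k).
Definition B0c (k dl : R) := (2 * k + 1) * dl.

Lemma step2 X (d : X -> X -> R) dl (HH : hyperbolic (@full X) d dl) (Hdl : 0 <= dl)
  k (Hk : 1 <= k) v (Hv : qseq d k v) (Js : nat)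
  (HJs : forall J, (Js <= J)%nat -> 6 * (A0c k dl + B0c k dl * INR (S J)) < INR (2 ^ J))
  m G (HG : geodesic_seg (@full X) d (v 0%nat) (v m) G) :
  forall i, (i <= m)%nat -> exists s, 0 <= s <= d (v 0%nat) (v m) /\
    d (v i) (G s) <= A0c k dl + B0c k dl * INR Js.
Proof.
  destruct (hyp_metric HH) as [D0 [Dp [Ds Dt]]].
  set (L := d (v 0%nat) (v m)).
  assert (HG0 : G 0 = v 0%nat) by (destruct HG; tauto).
  assert (HL0 : 0 <= L) by apply Dp.
  set (P := fun D : nat => forall j, (j <= m)%nat -> exists s, 0 <= s <= L /\
          d (v j) (G s) <= INR D).
  destruct (INR_unbounded (k * INR m + k)) as [Dm HDm].
  assert (HPm : P Dm).
  { intros j Hj. exists 0. split; [lra|]. rewrite HG0.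
    destruct (Hv 0%nat j ltac:(lia)) as [_ H]. rewrite Ds.
    assert (INR j <= INR m) by (apply le_INR; exact Hj).
    simpl INR in H. assert (k * INR j <= k * INR m) by (apply Rmult_le_compat_l; lra). lra. }
  destruct (@least_nat P _ HPm) as [D [HPD HDmin]].
  assert (HB : 0 <= B0c k dl) by (unfold B0c; apply Rmult_le_pos; lra).
  assert (HA : 0 <= A0c k dl) by (unfold A0c; assert (0 <= (2*k+1)*(2*dl+2*k)) by (apply Rmult_le_pos; lra); lra).
  assert (Hbound : INR D <= A0c k dl + B0c k dl * INR Js).
  { destruct D as [|D'].
    - simpl. pose proof (pos_INR Js). assert (0 <= B0c k dl * INR Js) by (apply Rmult_le_pos; lra). lra.
    - assert (HnP : ~ P D') by (apply HDmin; lia).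
      assert (Hex : exists i0, (i0 <= m)%nat /\ forall s, 0 <= s <= L -> INR D' < d (v i0) (G s)).
      { destruct (classic (exists i0, (i0 <= m)%nat /\
                   forall s, 0 <= s <= L -> INR D' < d (v i0) (G s))) as [h|h]; [exact h|].
        exfalso. apply HnP. intros j Hj.
        destruct (classic (exists s, 0 <= s <= L /\ d (v j) (G s) <= INR D')) as [h2|h2]; [exact h2|].
        exfalso. apply h. exists j. split; [exact Hj|]. intros s Hs.
        apply Rnot_le_lt. intro h3. apply h2. exists s. split; assumption. }
      destruct Hex as [i0 [Hi0 Hfar]].
      apply (final_arith HB HJs). intros J HJ.
      pose proof (step2_core HH Hdl Hk Hv HG Hi0 Hfar HPD J HJ) as H.
      unfold A0c, B0c. lra. }
  intros i Hi. destruct (HPD i Hi) as [s [Hs Hds]]. exists s. split; [exact Hs|]. lra.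
Qed.

Lemma step3 X (d : X -> X -> R) dl (HH : hyperbolic (@full X) d dl) (Hdl : 0 <= dl)
  k (Hk : 1 <= k) v (Hv : qseq d k v) (Js : nat)
  (HJs : forall J, (Js <= J)%nat -> 6 * (A0c k dl + B0c k dl * INR (S J)) < INR (2 ^ J))
  m G (HG : geodesic_seg (@full X) d (v 0%nat) (v m) G) :
  forall s, 0 <= s <= d (v 0%nat) (v m) -> exists j, (j <= m)%nat /\
    d (G s) (v j) <= 3 * (A0c k dl + B0c k dl * INR Js) + 2 * k.
Proof.
  destruct (hyp_metric HH) as [D0 [Dp [Ds Dt]]].
  pose proof (step2 HH Hdl Hk Hv HJs HG) as S2.
  set (H := A0c k dl + B0c k dl * INR Js) in *.
  set (L := d (v 0%nat) (v m)) in *.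
  assert (HG0 : G 0 = v 0%nat) by (destruct HG; tauto).
  assert (HB : 0 <= B0c k dl) by (unfold B0c; apply Rmult_le_pos; lra).
  assert (HA : 0 <= A0c k dl) by (unfold A0c; assert (0 <= (2*k+1)*(2*dl+2*k)) by (apply Rmult_le_pos; lra); lra).
  assert (HH0 : 0 <= H) by (unfold H; pose proof (pos_INR Js); assert (0 <= B0c k dl * INR Js) by (apply Rmult_le_pos; lra); lra).
  assert (Inv : forall i, (i <= m)%nat -> exists t tau, 0 <= t <= tau /\ tau <= L /\
     d (v i) (G t) <= H /\ forall s, 0 <= s <= tau -> exists j, (j <= i)%nat /\
       d (G s) (v j) <= 3 * H + 2 * k).
  { induction i as [|i IH]; intros Hi.
    - exists 0, 0. split; [lra|]. split; [apply Dp|]. rewrite HG0, D0. split; [lra|].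
      intros s Hs. exists 0%nat. split; [lia|]. replace s with 0 by lra. rewrite HG0, D0. lra.
    - destruct (IH ltac:(lia)) as [t [tau [Ht1 [Ht2 [Ht3 Ht4]]]]].
      destruct (S2 (S i) Hi) as [t' [Ht'1 Ht'2]].
      assert (Hti : d (G t) (G t') <= 2 * H + 2 * k).
      { destruct (Hv i (S i) ltac:(lia)) as [_ Hq]. rewrite S_INR in Hq.
        pose proof (Dt (G t) (v i) (G t')). pose proof (Dt (v i) (v (S i)) (G t')).
        rewrite (Ds (G t) (v i)) in *. lra. }
      assert (HtL : 0 <= t <= L) by lra.
      rewrite (geo_iso HG HtL Ht'1) in Hti.
      exists t', (Rmax tau t'). split; [split; [lra|apply Rmax_r]|].
      split; [apply Rmax_lub; lra|]. split; [exact Ht'2|].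
      intros s Hs. destruct (Rle_dec s tau) as [h|h].
      + destruct (Ht4 s ltac:(lra)) as [j [Hj1 Hj2]]. exists j. split; [lia|exact Hj2].
      + exists (S i). split; [lia|].
        assert (s <= t') by (unfold Rmax in Hs; destruct (Rle_dec tau t'); lra).
        assert (HsL : 0 <= s <= L) by lra.
        pose proof (Dt (G s) (G t') (v (S i))). rewrite (Ds (G t') (v (S i))) in *.
        rewrite (geo_iso HG HsL Ht'1) in H1.
        rewrite Rabs_left1 in H1 by lra. rewrite Rabs_left1 in Hti by lra. lra. }
  intros s Hs. destruct (Inv m (le_n m)) as [t [tau [Ht1 [Ht2 [Ht3 Ht4]]]]].
  destruct (Rle_dec s tau) as [h|h]; [apply Ht4; lra|].
  exists m. split; [lia|].
  assert (HtL : 0 <= t <= L) by lra.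
  rewrite Ds in Ht3. rewrite (geo_dist_end HG HtL) in Ht3.
  rewrite (geo_dist_end HG Hs). unfold L in *. lra.
Qed.

Lemma ray_gd V (E : V -> V -> Prop) r : geodesic_ray E r ->
  forall i j, INR (gd E (r i) (r j)) = Rabs (INR i - INR j).
Proof.
  intros Hr i j. rewrite Hr. destruct (Nat.leb_spec i j) as [h|h].
  - rewrite minus_INR by exact h. rewrite Rabs_left1; [ring|].
    apply le_INR in h; lra.
  - rewrite minus_INR by lia. apply lt_INR in h. rewrite Rabs_right; [ring|lra].
Qed.

Lemma tv_tdist V (E : V -> V -> Prop) a b : tdist E (TV a) (TV b) = INR (gd E b a).
Proof. reflexivity. Qed.

Lemma sec_bounds X V (d : X -> X -> R) (E : V -> V -> Prop) (Pi : X -> tpt V) r k s s' :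
  geodesic_ray E r -> (forall x y, tdist E (Pi x) (Pi y) <= d x y) ->
  qi_section d E Pi r k s -> qi_section d E Pi r k s' ->
  (forall i j, Rabs (INR i - INR j) <= d (s i) (s' j)) /\
  (forall i j, d (s i) (s j) <= k * Rabs (INR i - INR j) + k).
Proof.
  intros Hr Hlip [H1 H2] [H1' H2']. split.
  - intros i j. pose proof (Hlip (s i) (s' j)) as h. rewrite H1, H1', tv_tdist, ray_gd in h
      by exact Hr. rewrite Rabs_minus_sym. exact h.
  - intros i j. destruct (H2 i j) as [_ h]. rewrite ray_gd in h by exact Hr. exact h.
Qed.

Lemma sec_qseq X V (d : X -> X -> R) (E : V -> V -> Prop) (Pi : X -> tpt V) r k s :
  geodesic_ray E r -> (forall x y, tdist E (Pi x) (Pi y) <= d x y) ->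
  qi_section d E Pi r k s -> qseq d k s.
Proof.
  intros Hr Hlip Hs. destruct (sec_bounds Hr Hlip Hs Hs) as [B1 B2].
  intros i j Hij. apply le_INR in Hij.
  specialize (B1 i j). specialize (B2 i j).
  rewrite Rabs_left1 in B1, B2 by lra. split; lra.
Qed.

Theorem lemma3p4 :
  forall (delta0 L0 : R) (f : R -> R) (k : R), 1 <= k ->
  exists R0 : R, 0 <= R0 /\
  forall (X V : Type) (d : X -> X -> R) (E : V -> V -> Prop) (Pi : X -> tpt V)
         (db : V -> X -> X -> R) (de : V -> V -> X -> X -> R),
    tree_of_hyp_spaces d E Pi db de delta0 L0 f ->
    hyperbolic (@full X) d delta0 ->
    forall (r : nat -> V), geodesic_ray E r ->
    forall (alpha beta : nat -> X),
      qi_section d E Pi r k alpha -> qi_section d E Pi r k beta ->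
      same_boundary_point d alpha beta ->
      exists N : nat, forall n : nat, (N <= n)%nat ->
        db (r n) (alpha n) (beta n) <= R0.
Proof.
  intros dl L0 f k Hk.
  destruct (growth (6 * A0c k dl + 6 * B0c k dl + 1) (6 * B0c k dl)) as [Js HJs0].
  assert (HJs : forall J, (Js <= J)%nat -> 6 * (A0c k dl + B0c k dl * INR (S J)) < INR (2 ^ J)).
  { intros J HJ. specialize (HJs0 J HJ). rewrite S_INR. lra. }
  set (H := A0c k dl + B0c k dl * INR Js).
  set (H2 := 3 * H + 2 * k).
  set (C1 := H + 2 * dl + H2).
  set (C := C1 + k * C1 + k).
  exists (Rmax 0 (f C)). split; [apply Rmax_l|].
  intros X V d E Pi db de Htree HH r Hr alpha beta Ha Hb Hsb.
  destruct Htree as [_ [_ [_ [_ [_ [Hlip [_ [_ [Hdl [_ [_ [_ [_ [H2v _]]]]]]]]]]]]]].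
  destruct (hyp_metric HH) as [D0 [Dp [Ds Dt]]].
  pose proof (sec_qseq Hr Hlip Ha) as Qa. pose proof (sec_qseq Hr Hlip Hb) as Qb.
  destruct (sec_bounds Hr Hlip Ha Hb) as [Cab _].
  destruct (sec_bounds Hr Hlip Hb Hb) as [_ Ub].
  destruct (INR_unbounded (d (alpha 0%nat) (beta 0%nat) + H + 2 * dl)) as [N0 HN0].
  exists N0. intros n Hn.
  assert (HB : 0 <= B0c k dl) by (unfold B0c; apply Rmult_le_pos; lra).
  assert (HA : 0 <= A0c k dl) by (unfold A0c; assert (0 <= (2*k+1)*(2*dl+2*k)) by (apply Rmult_le_pos; lra); lra).
  assert (HH0 : 0 <= H) by (unfold H; pose proof (pos_INR Js); assert (0 <= B0c k dl * INR Js) by (apply Rmult_le_pos; lra); lra).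
  set (M := k * INR n + k + H + dl + 1).
  destruct Hsb as [_ [_ Hsb3]]. destruct (Hsb3 (alpha 0%nat) M) as [N1 HN1].
  set (m := Nat.max N1 n).
  assert (HGp : M <= gprod d (alpha 0%nat) (alpha m) (beta m)) by (apply HN1; unfold m; lia).
  destruct (hyp_geo HH (alpha 0%nat) (alpha m)) as [Ga HGa].
  destruct (hyp_geo HH (alpha m) (beta m)) as [X1 HX1].
  destruct (hyp_geo HH (beta m) (alpha 0%nat)) as [X2 HX2].
  destruct (hyp_geo HH (alpha 0%nat) (beta 0%nat)) as [Xb HXb].
  destruct (hyp_geo HH (beta 0%nat) (beta m)) as [Gb HGb].
  destruct (step2 HH Hdl Hk Qa HJs HGa (i:=n) ltac:(unfold m; lia)) as [s [Hs Hds]].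
  fold H in Hds.
  destruct (Qa 0%nat n ltac:(lia)) as [Qa1 Qa2]. simpl (INR 0) in Qa1, Qa2.
  assert (HnN : INR N0 <= INR n) by (apply le_INR; exact Hn).
  assert (Hjclose : exists j, d (alpha n) (beta j) <= C1).
  { destruct (hyp_slim HH HGa HX1 HX2 Hs) as [t [[Ht Hd]|[Ht Hd]]].
    - exfalso. pose proof (geo_gprod (alpha 0%nat) HH HX1 Ht).
      pose proof (Dt (alpha 0%nat) (alpha n) (Ga s)).
      pose proof (Dt (alpha 0%nat) (Ga s) (X1 t)).
      rewrite (Ds (alpha n) (Ga s)) in *. unfold M in HGp. lra.
    - destruct (hyp_slim HH HX2 HXb HGb Ht) as [t' [[Ht' Hd']|[Ht' Hd']]].
      + exfalso. pose proof (geo_dist_start HXb Ht').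
        pose proof (Dt (alpha 0%nat) (Xb t') (alpha n)).
        pose proof (Dt (Xb t') (X2 t) (alpha n)).
        pose proof (Dt (X2 t) (Ga s) (alpha n)).
        rewrite (Ds (alpha 0%nat) (Xb t')), (Ds (Xb t') (X2 t)), (Ds (X2 t) (Ga s)),
          (Ds (Ga s) (alpha n)) in *. lra.
      + destruct (@step3 _ _ _ HH Hdl _ Hk _ Qb Js HJs m Gb HGb t' Ht') as [j [Hj Hdj]].
        fold H H2 in Hdj. exists j.
        pose proof (Dt (alpha n) (Ga s) (beta j)).
        pose proof (Dt (Ga s) (X2 t) (beta j)).
        pose proof (Dt (X2 t) (Gb t') (beta j)).
        unfold C1. lra. }
  destruct Hjclose as [j Hj].
  pose proof (Cab n j) as Hnj.
  pose proof (Ub j n) as Hbj. rewrite Rabs_minus_sym in Hbj.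
  assert (k * Rabs (INR n - INR j) <= k * C1) by (apply Rmult_le_compat_l; lra).
  assert (Hdn : d (alpha n) (beta n) <= C).
  { pose proof (Dt (alpha n) (beta j) (beta n)). unfold C. lra. }
  destruct Ha as [Ha1 _]. destruct Hb as [Hb1 _].
  eapply Rle_trans; [apply (H2v (r n) (alpha n) (beta n) C)|apply Rmax_r].
  - unfold Xv. apply Ha1.
  - unfold Xv. apply Hb1.
  - exact Hdn.
Qed.
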